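(* Let $\sigma=(a_1,\ldots,a_s)$ be a partition of $r$ with $d=\gcd(a_1,\ldots,a_s)\ge2$, let $q=md+t$ with $0\le t\le d-1$, and let $H=H(n,r,q\mid\sigma)$. Let $H_m=H(n,r,md\mid\sigma)$, viewed as obtained from $H$ by deleting the top $t$ vertices of every class. Let $\sigma^*=(a_1/d,\ldots,a_s/d)$, a partition of $r/d$, and $H^*=H(n,r/d,m\mid\sigma^* )$. Then: (1) for every maximum matching $M$ of $H$ there is a matching $M^*$ of $H^*$ with $|M^*|=|M|$; (2) for every maximum matching $M^*$ of $H^*$ there is a matching $M$ of $H$ with $|M|=|M^*|$; (3) consequently $\nu(H)=\nu(H_m)=\nu(H^* )$.
   Context: A $\sigma$-hypergraph $H=H(n,r,q\mid\sigma)$, for a partition $\sigma$ of $r$, is the $r$-uniform hypergraph whose vertex set is the disjoint union of $n$ classes $V_1,\ldots,V_n$, each of size $q$; an $r$-subset $K$ of vertices is an edge iff the multiset of non-zero values $|K\cap V_i|$ equals $\sigma$. The vertices of each class are ordered $v_{1,i},\ldots,v_{q,i}$, and the top $t$ vertices of $V_i$ are $v_{1,i},\ldots,v_{t,i}$. A matching is a set of pairwise vertex-disjoint edges; $\nu(\cdot)$ denotes the maximum size of a matching. *)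

(* Defs.v *)
From mathcomp Require Import all_boot.
Set Implicit Arguments. Unset Strict Implicit. Unset Printing Implicit Defensive.

(* Vertices of H(n,r,q|sigma): pairs (i, j) meaning v_{j+1,i}, the (j+1)-th
   vertex of class V_i (0-indexed: class i : 'I_n, position j : 'I_q). *)
Definition vtx (n q : nat) := ('I_n * 'I_q)%type.

Definition class_count (n q : nat) (K : {set vtx n q}) (i : 'I_n) : nat :=
  #|[set v in K | v.1 == i]|.

Definition profile (n q : nat) (K : {set vtx n q}) : seq nat :=
  [seq c <- [seq class_count K i | i <- enum 'I_n] | c != 0].

Definition is_partition (sigma : seq nat) (r : nat) : Prop :=
  all (fun a => 0 < a) sigma /\ sumn sigma = r.

Definition sigma_hg (n r q : nat) (sigma : seq nat) : {set {set vtx n q}} :=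
  [set K : {set vtx n q} | (#|K| == r) && perm_eq (profile K) sigma].

Definition is_matching (T : finType) (E M : {set {set T}}) : Prop :=
  M \subset E /\
  (forall e f, e \in M -> f \in M -> e != f -> [disjoint e & f]).

Definition is_matchingb (T : finType) (E M : {set {set T}}) : bool :=
  (M \subset E) &&
  [forall e in M, forall f in M, (e != f) ==> [disjoint e & f]].

Definition nu (T : finType) (E : {set {set T}}) : nat :=
  \max_(M : {set {set T}} | is_matchingb E M) #|M|.

Definition is_max_matching (T : finType) (E M : {set {set T}}) : Prop :=
  is_matching E M /\ #|M| = nu E.

Definition gcd_seq (s : seq nat) : nat := \big[gcdn/0]_(a <- s) a.

(* Main.v *)
Require Import Defs.
From mathcomp Require Import all_boot.
From mathcomp Require Import zify.
Set Implicit Arguments. Unset Strict Implicit. Unset Printing Implicit Defensive.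

Lemma sumn_filter0 (l : seq nat) : sumn [seq c <- l | c != 0] = sumn l.
Proof. by elim: l => //= a l IH; case: eqP => [->|_] //=; rewrite IH. Qed.

Lemma card_sum_cc n q (K : {set vtx n q}) :
  #|K| = \sum_(i < n) class_count K i.
Proof.
rewrite -sum1_card (partition_big (fun v : vtx n q => v.1) predT) //=.
apply: eq_bigr => i _; rewrite /class_count -sum1_card.
rewrite big_mkcond /= [RHS]big_mkcond /=; apply: eq_bigr => v _.
by rewrite !inE.
Qed.

Lemma card_profile n q (K : {set vtx n q}) : #|K| = sumn (profile K).
Proof.
by rewrite /profile sumn_filter0 sumnE big_map big_enum /= card_sum_cc.
Qed.

Lemma edgeE n r q sig (K : {set vtx n q}) : r = sumn sig ->
  (K \in sigma_hg n r q sig) = perm_eq (profile K) sig.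
Proof.
move=> ->; rewrite inE card_profile.
case P: (perm_eq _ _); last by rewrite andbF.
by rewrite (perm_sumn P) eqxx.
Qed.

Lemma filter_map_f (f : nat -> nat) (l : seq nat) : f 0 = 0 ->
  (forall x, x \in [seq c <- l | c != 0] -> f x != 0) ->
  [seq c <- map f l | c != 0] = map f [seq c <- l | c != 0].
Proof.
move=> f0; elim: l => //= a l IH H.
have [a0|a0] := eqVneq a 0.
  by rewrite a0 f0 /= IH // => x xi; apply: H; rewrite a0.
rewrite a0 in H *.
have fa : f a != 0 by apply: H; rewrite inE eqxx.
rewrite fa /= IH // => x xi; apply: H; by rewrite inE xi orbT.
Qed.

Lemma profile_map n q q' (K : {set vtx n q}) (K' : {set vtx n q'}) f :
  (forall i, class_count K' i = f (class_count K i)) -> f 0 = 0 ->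
  (forall x, x \in profile K -> f x != 0) -> profile K' = map f (profile K).
Proof.
move=> Hc f0 Hf; rewrite /profile -filter_map_f // -map_comp.
by congr filter; apply: eq_map => i /=.
Qed.

Lemma card_interval q a b : a <= b -> b <= q ->
  #|[set j : 'I_q | a <= j < b]| = b - a.
Proof.
move=> ab bq.
rewrite -sum1_card.
rewrite (eq_bigl (fun j : 'I_q => a <= j < b)); last by move=> j; rewrite inE.
rewrite -(big_mkord (fun j => a <= j < b) (fun _ => 1)) sum1_count.
rewrite /index_iota subn0.
have -> : q = a + ((b - a) + (q - b)) by lia.
rewrite iotaD iotaD !count_cat add0n.
have -> : count (fun j => a <= j < b) (iota 0 a) = 0.
  apply/eqP; rewrite -leqn0 leqNgt -has_count; apply/hasPn => j.
  by rewrite mem_iota; lia.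
have -> : count (fun j => a <= j < b) (iota (a + (b - a)) (q - b)) = 0.
  apply/eqP; rewrite -leqn0 leqNgt -has_count; apply/hasPn => j.
  by rewrite mem_iota; lia.
rewrite addn0 add0n.
have : all (fun j => a <= j < b) (iota a (b - a)).
  by apply/allP => j; rewrite mem_iota; lia.
by rewrite all_count size_iota => /eqP.
Qed.

Lemma cc_interval n q (o c : 'I_n -> nat) i : o i + c i <= q ->
  class_count [set v : vtx n q | o v.1 <= v.2 < o v.1 + c v.1] i = c i.
Proof.
move=> H; rewrite /class_count.
have -> : [set v in [set v : vtx n q | o v.1 <= v.2 < o v.1 + c v.1] | v.1 == i]
   = (pair i) @: [set j : 'I_q | o i <= j < o i + c i].
  apply/setP => -[i' j]; rewrite !inE /=.
  apply/idP/imsetP => [/andP[H1 /eqP E]|[j' Hj' [-> ->]]].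
    by exists j => //; rewrite ?inE -E.
  by move: Hj'; rewrite inE eqxx andbT.
rewrite card_imset; last by move=> x y [].
rewrite card_interval //; [lia | by rewrite leq_addr].
Qed.

Lemma realize n q (X : eqType) (c : X -> 'I_n -> nat) (s : seq X) :
 forall (o : 'I_n -> nat),
 (forall i, o i + sumn [seq c x i | x <- s] <= q) ->
 exists ps : seq (X * {set vtx n q}),
 [/\ map fst ps = s,
   forall p p', p \in ps -> p' \in ps -> p != p' -> [disjoint p.2 & p'.2],
   forall p, p \in ps -> forall i, class_count p.2 i = c p.1 i &
   forall p, p \in ps -> forall v, v \in p.2 -> o v.1 <= v.2].
Proof.
elim: s => [|x s IH] o Ho.
  by exists [::]; split.
have [ps [H1 H2 H3 H4]] : exists ps : seq (X * {set vtx n q}),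
   [/\ map fst ps = s,
   forall p p', p \in ps -> p' \in ps -> p != p' -> [disjoint p.2 & p'.2],
   forall p, p \in ps -> forall i, class_count p.2 i = c p.1 i &
   forall p, p \in ps -> forall v, v \in p.2 -> o v.1 + c x v.1 <= v.2].
  apply: (IH (fun i => o i + c x i)) => i; have := Ho i; rewrite /=; lia.
set K0 := [set v : vtx n q | o v.1 <= v.2 < o v.1 + c x v.1].
have dK0 : forall p, p \in ps -> [disjoint K0 & p.2].
  move=> p pin; rewrite disjoints_subset; apply/subsetP => v; rewrite /K0 !inE => /andP[_ lt].
  apply/negP => vp; have := H4 p pin v vp; by rewrite leqNgt lt.
exists ((x, K0) :: ps); split.
- by rewrite /= H1.
- move=> p p'; rewrite !inE => /predU1P[->|pin] /predU1P[->|p'in].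
  + by rewrite eqxx.
  + by move=> _; apply: dK0.
  + by move=> _; rewrite disjoint_sym; apply: dK0.
  + by apply: H2.
- move=> p; rewrite inE => /predU1P[-> i|pin]; last exact: H3.
  by apply: cc_interval; have := Ho i; rewrite /=; lia.
- move=> p; rewrite inE => /predU1P[-> v|pin v vp]; first by rewrite /K0 inE => /andP[].
  have := H4 p pin v vp; lia.
Qed.

Lemma sum_disj_card (T : finType) (C : {set T}) (s : seq {set T}) :
  uniq s -> (forall e f, e \in s -> f \in s -> e != f -> [disjoint e & f]) ->
  sumn [seq #|e :&: C| | e <- s] = #|\bigcup_(e <- s) (e :&: C)|.
Proof.
elim: s => [|x s IH] /=; first by rewrite big_nil cards0.
move=> /andP[xs us] D; rewrite big_cons IH //; last first.
  by move=> e f es fs; apply: D; rewrite inE ?es ?fs orbT.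
rewrite cardsU.
suff -> : (x :&: C) :&: \bigcup_(j <- s) (j :&: C) = set0 by rewrite cards0 subn0.
apply/setP => v; rewrite !inE; apply/negP => /andP[/andP[vx _]].
rewrite bigcup_seq => /bigcupP [e es]; rewrite inE => /andP[ve _].
have xe : x != e by apply: contraNneq xs => ->.
have es' : e \in s := es.
have dxe : [disjoint x & e].
  apply: D => //; [exact: mem_head | by apply/orP; right].
by move: (disjointFr dxe vx); rewrite ve.
Qed.

Lemma match_sum n q (E M : {set {set vtx n q}}) i : is_matching E M ->
  sumn [seq class_count e i | e <- enum M] <= q.
Proof.
move=> [_ D]; set C := [set v : vtx n q | v.1 == i].
have -> : [seq class_count e i | e <- enum M] = [seq #|e :&: C| | e <- enum M].
  apply: eq_map => e; rewrite /class_count; apply: eq_card => v.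
  by rewrite !inE.
rewrite sum_disj_card; [|exact: enum_uniq|by move=> e f; rewrite !mem_enum; apply: D].
have cardC : #|C| = q.
  have -> : C = (pair i) @: [set: 'I_q].
    apply/setP => -[i' j]; rewrite !inE /=; apply/eqP/imsetP => [->|[j' _ [-> _]]] //.
    by exists j; rewrite ?inE.
  by rewrite card_imset ?cardsT ?card_ord // => x y [].
rewrite -[X in _ <= X]cardC.
apply: subset_leq_card; rewrite bigcup_seq; apply/bigcupsP => e _; exact: subsetIr.
Qed.

Lemma matchingP (T : finType) (E M : {set {set T}}) :
  is_matching E M <-> is_matchingb E M.
Proof.
rewrite /is_matching /is_matchingb; split.
  move=> [S D]; rewrite S /=; apply/forallP => e; apply/implyP => eM.
  apply/forallP => f; apply/implyP => fM; apply/implyP; exact: D.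
move=> /andP[S /forallP D]; split => // e f eM fM ef.
by have := D e; rewrite eM /= => /forallP /(_ f); rewrite fM ef.
Qed.

Lemma transfer n q q' (E : {set {set vtx n q}}) (E' : {set {set vtx n q'}})
  (f : nat -> nat) (M : {set {set vtx n q}}) :
 is_matching E M ->
 (forall i, sumn [seq f (class_count e i) | e <- enum M] <= q') ->
 (forall e (K : {set vtx n q'}), e \in E ->
     (forall i, class_count K i = f (class_count e i)) -> K \in E') ->
 (forall K, K \in E' -> K != set0) ->
 exists M', is_matching E' M' /\ #|M'| = #|M|.
Proof.
move=> Mm Hs HE Hne.
have [ps [H1 H2 H3 _]] := @realize n q' _ (fun e i => f (class_count e i))
   (enum M) (fun _ => 0) (fun i => Hs i).
have inE' : forall p, p \in ps -> p.2 \in E'.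
  move=> p pin; apply: (HE p.1); last exact: H3.
  have : p.1 \in map fst ps by apply: map_f.
  by rewrite H1 mem_enum; apply: (subsetP Mm.1).
have ups : uniq ps by apply: (@map_uniq _ _ fst); rewrite H1 enum_uniq.
have us : uniq (map snd ps).
  rewrite map_inj_in_uniq // => p p' pin p'in eq12.
  apply/eqP; apply/negP => /negP neq.
  have := H2 p p' pin p'in neq.
  rewrite eq12 => /disjoint_setI0; rewrite setIid => e0.
  by have := Hne _ (inE' p' p'in); rewrite e0 eqxx.
exists [set:: map snd ps]; split.
  split.
    apply/subsetP => K; rewrite inE => /mapP [p pin ->]; exact: inE'.
  move=> K K'; rewrite !inE => /mapP [p pin ->] /mapP [p' p'in ->] neq.
  by apply: H2 => //; apply: contraNneq neq => ->.
rewrite cardsE (card_uniqP us) size_map cardE -H1 size_map.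
done.
Qed.

Lemma nu_eq (T T' : finType) (E : {set {set T}}) (E' : {set {set T'}}) :
 (forall M, is_matching E M -> exists M', is_matching E' M' /\ #|M'| = #|M|) ->
 (forall M', is_matching E' M' -> exists M, is_matching E M /\ #|M| = #|M'|) ->
 nu E = nu E'.
Proof.
move=> F G; apply/eqP; rewrite eqn_leq; apply/andP; split;
  apply/bigmax_leqP => M /matchingP Mm.
  have [M' [M'm <-]] := F M Mm; apply: leq_bigmax_cond; exact/matchingP.
have [M' [M'm <-]] := G M Mm; apply: leq_bigmax_cond; exact/matchingP.
Qed.

Lemma gcd_dvd (s : seq nat) a : a \in s -> gcd_seq s %| a.
Proof.
rewrite /gcd_seq; elim: s => //= b s IH; rewrite inE big_cons => /predU1P[->|bs].
  exact: dvdn_gcdl.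
exact: dvdn_trans (dvdn_gcdr _ _) (IH bs).
Qed.

Lemma sumn_mulr (X : Type) (g : X -> nat) d (s : seq X) :
  sumn [seq g x * d | x <- s] = sumn [seq g x | x <- s] * d.
Proof. by elim: s => //= x s ->; rewrite mulnDl. Qed.

Lemma general n r q m t d (sigma : seq nat) :
  is_partition sigma r -> d = gcd_seq sigma -> 2 <= d -> q = m * d + t -> t < d ->
  (forall M, is_matching (sigma_hg n r q sigma) M -> exists Ms,
     is_matching (sigma_hg n (r %/ d) m [seq a %/ d | a <- sigma]) Ms /\ #|Ms| = #|M|) /\
  (forall Ms, is_matching (sigma_hg n (r %/ d) m [seq a %/ d | a <- sigma]) Ms ->
     exists M, is_matching (sigma_hg n r q sigma) M /\ #|M| = #|Ms|).
Proof.
move=> [/allP pos sr] dE d2 qE td.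
have d0 : 0 < d by lia.
have dvd : forall a, a \in sigma -> d %| a by move=> a; rewrite dE; apply: gcd_dvd.
have sumd : sumn [seq a %/ d | a <- sigma] * d = r.
  rewrite -sumn_mulr -sr; congr sumn; rewrite -[RHS]map_id.
  by apply/eq_in_map => a /dvd /divnK.
have rd : r %/ d = sumn [seq a %/ d | a <- sigma] by rewrite -sumd mulnK.
have rpos : 0 < r %/ d.
  case: sigma pos dvd sr dE {sumd rd} => [|a s] pos dvd sr; first by rewrite /gcd_seq big_nil; lia.
  move=> _; rewrite divn_gt0 //; apply: leq_trans (dvdn_leq _ (dvd a _)) _.
  - by apply: pos; rewrite mem_head.
  - exact: mem_head.
  - by rewrite -sr /= leq_addr.
have rpos' : 0 < r by move: rpos; rewrite divn_gt0 //; lia.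
have mapK : [seq a %/ d * d | a <- sigma] = sigma.
  rewrite -[RHS]map_id; by apply/eq_in_map => a /dvd /divnK.
set H := sigma_hg n r q sigma.
set Hs := sigma_hg n (r %/ d) m [seq a %/ d | a <- sigma].
have ccd : forall e i, e \in H -> d %| class_count e i.
  move=> e i; rewrite /H edgeE // => P.
  have [->|c0] := eqVneq (class_count e i) 0; first exact: dvdn0.
  apply: dvd; rewrite -(perm_mem P) /profile mem_filter c0 /=.
  by apply: map_f; rewrite mem_enum.
have ne : forall (q' r' : nat) sig (K : {set vtx n q'}), 0 < r' ->
    K \in sigma_hg n r' q' sig -> K != set0.
  move=> q' r' sig K r0; rewrite inE => /andP[/eqP cK _].
  by apply/eqP => K0; move: cK; rewrite K0 cards0; lia.
split.
- move=> M Mm; apply: (transfer (f := fun x => x %/ d) Mm).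
  + move=> i; have := match_sum i Mm.
    have -> : [seq class_count e i | e <- enum M] =
              [seq class_count e i %/ d * d | e <- enum M].
      apply/eq_in_map => e; rewrite mem_enum => eM; apply/esym/divnK; apply: ccd.
      exact: (subsetP Mm.1).
    rewrite sumn_mulr => h; have h2 := leq_trans h (eq_leq qE).
    rewrite leqNgt; apply/negP => lt.
    have := leq_mul lt (leqnn d); lia.
  + move=> e K eH Hc; rewrite /Hs edgeE //.
    rewrite (@profile_map _ _ _ e K (fun x => x %/ d) Hc) ?div0n //.
      by apply: perm_map; move: eH; rewrite /H edgeE.
    move=> x xp; move: eH; rewrite /H edgeE // => P.
    have xs : x \in sigma by rewrite -(perm_mem P).
    rewrite -lt0n divn_gt0 //; apply: dvdn_leq; [exact: pos | exact: dvd].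
  + by move=> K; apply: ne.
- move=> Ms Mm; apply: (transfer (f := fun x => x * d) Mm).
  + move=> i; rewrite sumn_mulr; apply: leq_trans (_ : m * d <= q); last by lia.
    by rewrite leq_mul2r (match_sum i Mm) orbT.
  + move=> e K eH Hc; rewrite /H edgeE //.
    rewrite (@profile_map _ _ _ e K (fun x => x * d) Hc) ?mul0n //.
      rewrite -[X in perm_eq _ X]mapK.
      have -> : [seq a %/ d * d | a <- sigma] =
                map (fun x => x * d) [seq a %/ d | a <- sigma] by rewrite -map_comp.
      by apply: perm_map; move: eH; rewrite /Hs edgeE.
    move=> x; rewrite mem_filter => /andP[x0 _]; rewrite muln_eq0 negb_or x0 /=; lia.
  + by move=> K; apply: ne.
Qed.

Theorem lemma3p5 (n r q m t d : nat) (sigma : seq nat) :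
  is_partition sigma r ->
  d = gcd_seq sigma -> 2 <= d ->
  q = m * d + t -> t <= d - 1 ->
  let H := sigma_hg n r q sigma in
  let Hm := sigma_hg n r (m * d) sigma in
  let Hs := sigma_hg n (r %/ d) m [seq a %/ d | a <- sigma] in
  (forall M, is_max_matching H M ->
     exists Ms, is_matching Hs Ms /\ #|Ms| = #|M|) /\
  (forall Ms, is_max_matching Hs Ms ->
     exists M, is_matching H M /\ #|M| = #|Ms|) /\
  (nu H = nu Hm /\ nu Hm = nu Hs).
Proof.
move=> P dE d2 qE td H Hm Hs.
have td' : t < d by lia.
have [A B] := general n P dE d2 qE td'.
have [Am Bm] := general n (m := m) (t := 0) (q := m * d) P dE d2 (esym (addn0 _)) (leq_ltn_trans (leq0n 1) d2).
split; [|split].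
- by move=> M [Mm _]; apply: A.
- by move=> Ms [Mm _]; apply: B.
- have e1 : nu H = nu Hs by apply: nu_eq.
  have e2 : nu Hm = nu Hs by apply: nu_eq.
  by rewrite e1 e2.
Qed.
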